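(* Let $f:\mathbb{R}^d\to\mathbb{R}^d$ be smooth with all derivatives uniformly bounded, let $n\ge 3$, and for each step size $h>0$ (in some range $0<h\le h_0$) let $q:[0,h]\to\mathbb{R}^d$ be a smooth solution of $\ddot q(t)=f(q(t))$ and let $q_d$ be a prolongation-collocation Hermite polynomial of degree $2n-1$ for $q$ on $[0,h]$ (as defined in the context), with $\dot q$ and $\dot q_d(\tau)$, $\tau\in\{0,h\}$, bounded uniformly in $h$. Suppose that for some $p>0$ and for $\tau\in\{0,h\}$ one has $\dot q_d(\tau)=\dot q(\tau)+\mathcal{O}(h^p)$ as $h\to 0$. Then for $\tau\in\{0,h\}$, $$q_d^{(j)}(\tau)=q^{(j)}(\tau)+\mathcal{O}(h^p),\qquad j=3,\dots,n.$$
   Context: Setting: configuration space $Q=\mathbb{R}^d$, separable Lagrangian $L(q,\dot q)=\tfrac12 m|\dot q|^2-V(q)$, whose Euler--Lagrange equation is the second-order ODE $\ddot q=f(q)$ with $f=-\nabla V/m$. Given a solution $q$ of this ODE on $[0,h]$, a prolongation-collocation Hermite polynomial of degree $2n-1$ for $q$ on $[0,h]$ is a polynomial $q_d:[0,h]\to\mathbb{R}^d$ of degree at most $2n-1$ satisfying the boundary conditions $q_d(0)=q(0)$, $q_d(h)=q(h)$ and the collocation conditions, for $\tau\in\{0,h\}$ and $j=2,\dots,n$, $$q_d^{(j)}(\tau)=\frac{d^{j-2}}{dt^{j-2}}f(q_d(t))\Big|_{t=\tau},$$ i.e. $q_d$ satisfies the equation $\ddot q=f(q)$ and its first $n-2$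 time-derivatives (prolongations) $q^{(3)}=f'(q)\dot q$, etc., at the endpoints $t=0$ and $t=h$. Such a polynomial is written in two-point Hermite form $q_d(t)=\sum_{j=0}^{n-1}\big(q_d^{(j)}(0)H_{n,j}(t)+(-1)^j q_d^{(j)}(h)H_{n,j}(h-t)\big)$ with $H_{n,j}(t)=\frac{t^j}{j!}(1-t/h)^n\sum_{s=0}^{n-j-1}\binom{n+s-1}{s}(t/h)^s$. The $\mathcal{O}(\cdot)$ symbols are as $h\to0$ with constants independent of $h$. *)

(* Defs.v *)
From Stdlib Require Fin.
From Stdlib Require Import Reals List.
Open Scope R_scope.

Definition Vec (d : nat) : Type := Fin.t d -> R.

Definition shift {d : nat} (x : Vec d) (i : Fin.t d) (s : R) : Vec d :=
  fun k => x k + (if Fin.eq_dec k i then s else 0).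

(* Df l is the iterated partial
   derivative in the directions listed in l: Df (i :: l) = d/dx_i (Df l).
   (Existence of all bounded partials of all orders is equivalent to f being
   C^infinity with all Frechet derivatives bounded.) *)
Definition smooth_bounded_derivs {d : nat} (f : Vec d -> Vec d) : Prop :=
  exists Df : list (Fin.t d) -> Vec d -> Vec d,
    (forall x k, Df nil x k = f x k) /\
    (forall l i x k,
        derivable_pt_lim (fun s => Df l (shift x i s) k) 0 (Df (i :: l) x k)) /\
    (forall l, exists C, forall x k, Rabs (Df l x k) <= C).

Definition deriv_tower {d : nat} (g : R -> Vec d) (D : nat -> R -> Vec d) : Prop :=
  (forall t i, D 0%nat t i = g t i) /\
  (forall k t i, derivable_pt_lim (fun s => D k s i) t (D (S k) t i)).

Definition poly_curve_deg_le {d : nat} (m : nat) (g : R -> Vec d) : Prop :=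
  exists c : nat -> Vec d, forall t i, g t i = sum_f_R0 (fun k => c k i * t ^ k) m.

Definition pc_hermite {d : nat} (f : Vec d -> Vec d) (n : nat) (h : R)
    (q qd : R -> Vec d) (Dqd : nat -> R -> Vec d) : Prop :=
  poly_curve_deg_le (2 * n - 1) qd /\
  (forall i, qd 0 i = q 0 i) /\ (forall i, qd h i = q h i) /\
  exists F : nat -> R -> Vec d,
    deriv_tower (fun t => f (qd t)) F /\
    forall j tau i, (2 <= j <= n)%nat -> (tau = 0 \/ tau = h) ->
      Dqd j tau i = F (j - 2)%nat tau i.

(* Main.v *)
Require Import Defs.
From Stdlib Require Import Reals List Lra Lia Psatz FunctionalExtensionality FinFun.
Open Scope R_scope.

Definition lsum {A : Type} (L : list A) (f : A -> R) : R :=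
  fold_right (fun a acc => f a + acc) 0 L.

Lemma lsum_ext {A} (L : list A) f g : (forall a, In a L -> f a = g a) -> lsum L f = lsum L g.
Proof. induction L; simpl; intros H; auto. rewrite H, IHL; auto. Qed.

Lemma lsum_app {A} (L1 L2 : list A) f : lsum (L1 ++ L2) f = lsum L1 f + lsum L2 f.
Proof. induction L1; simpl; [ring|]. rewrite IHL1; ring. Qed.

Lemma lsum_map {A B} (L : list A) (g : A -> B) f : lsum (map g L) f = lsum L (fun x => f (g x)).
Proof. induction L; simpl; auto. rewrite IHL; auto. Qed.

Lemma lsum_flat_map {A B} (L : list A) (g : A -> list B) f :
  lsum (flat_map g L) f = lsum L (fun x => lsum (g x) f).
Proof. induction L; simpl; auto. rewrite lsum_app, IHL; auto. Qed.

Lemma lsum_scal {A} (L : list A) c f : lsum L (fun x => c * f x) = c * lsum L f.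
Proof. induction L; simpl; [ring|]. rewrite IHL; ring. Qed.

Lemma lsum_plus {A} (L : list A) f g : lsum L (fun x => f x + g x) = lsum L f + lsum L g.
Proof. induction L; simpl; [ring|]. rewrite IHL; ring. Qed.

Lemma lsum_zero {A} (L : list A) : lsum L (fun _ => 0) = 0.
Proof. induction L; simpl; auto. rewrite IHL; ring. Qed.

Lemma lsum_le {A} (L : list A) f g : (forall a, In a L -> f a <= g a) -> lsum L f <= lsum L g.
Proof. induction L; simpl; intros H; [lra|]. pose proof (H a (or_introl eq_refl)).
  assert (lsum L f <= lsum L g) by auto. lra. Qed.

Lemma lsum_nonneg {A} (L : list A) f : (forall a, In a L -> 0 <= f a) -> 0 <= lsum L f.
Proof. intros H. rewrite <- (lsum_zero L). apply lsum_le; auto. Qed.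

Lemma lsum_abs {A} (L : list A) f : Rabs (lsum L f) <= lsum L (fun x => Rabs (f x)).
Proof. induction L; simpl. rewrite Rabs_R0; lra.
  eapply Rle_trans. apply Rabs_triang. lra. Qed.

Lemma cs_ineq {A} (L : list A) (a : A -> R) :
  lsum L (fun i => Rabs (a i)) * lsum L (fun i => Rabs (a i))
  <= INR (length L) * lsum L (fun i => a i * a i).
Proof.
  induction L as [|x L IH]. simpl; lra.
  replace (INR (length (x::L))) with (INR (length L) + 1) by (simpl length; rewrite S_INR; ring).
  change (lsum (x :: L) ?f) with (f x + lsum L f). cbv beta.
  set (S := lsum L (fun i => Rabs (a i))) in *.
  set (Q := lsum L (fun i => a i * a i)) in *.
  set (n := INR (length L)) in *.
  assert (0 <= S) by (apply lsum_nonneg; intros; apply Rabs_pos).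
  assert (0 <= Q) by (apply lsum_nonneg; intros; nra).
  assert (0 <= n) by apply pos_INR.
  assert (Rabs (a x) * Rabs (a x) = a x * a x) by (rewrite <- Rabs_mult; apply Rabs_right; nra).
  pose proof (Rabs_pos (a x)).
  set (u := Rabs (a x)) in *. rewrite <- H2.
  assert (2 * u * S <= n * (u * u) + Q).
  { destruct (Req_dec n 0) as [Hn|Hn].
    - rewrite Hn in IH. assert (S * S <= 0) by lra. assert (HS0 : S = 0) by nra. assert (2 * u * S = 0) by (rewrite HS0; ring). rewrite Hn; lra.
    - assert (0 < n) by lra.
      assert (E : n * (n * (u * u) + Q - 2 * u * S) =
                (n * u - S) * (n * u - S) + (n * Q - S * S)) by ring.
      assert (0 <= (n * u - S) * (n * u - S)) by apply Rle_0_sqr.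
      assert (0 <= n * (n * (u * u) + Q - 2 * u * S)) by lra.
      assert (0 <= n * (u * u) + Q - 2 * u * S).
      { destruct (Rle_dec 0 (n * (u * u) + Q - 2 * u * S)); auto.
        exfalso. assert (n * (n * (u * u) + Q - 2 * u * S) < 0). apply Rmult_pos_neg; lra. lra. }
      lra. }
  nra.
Qed.

Lemma dl_ext f g x l : (forall s, f s = g s) -> derivable_pt_lim f x l -> derivable_pt_lim g x l.
Proof. intros H D. replace g with f; auto. apply functional_extensionality; auto. Qed.

Lemma dl_lsum {A} (L : list A) (F : A -> R -> R) (F' : A -> R) t :
  (forall a, In a L -> derivable_pt_lim (F a) t (F' a)) ->
  derivable_pt_lim (fun s => lsum L (fun a => F a s)) t (lsum L F').
Proof.
  induction L as [|a L IH]; intros H; simpl.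
  - apply (dl_ext (fct_cte 0)). intros; reflexivity. apply derivable_pt_lim_const.
  - apply (dl_ext (plus_fct (F a) (fun s => lsum L (fun a => F a s)))). intros; reflexivity.
    apply derivable_pt_lim_plus; auto with datatypes.
Qed.

Lemma dl_shift F s l : derivable_pt_lim (fun u => F (s + u)) 0 l -> derivable_pt_lim F s l.
Proof. intros H eps He. destruct (H eps He) as [del Hd]. exists del. intros h Hh Hl.
 specialize (Hd h Hh Hl). rewrite Rplus_0_l, Rplus_0_r in Hd. exact Hd. Qed.

Lemma dl_affine c b x : derivable_pt_lim (fun u => c * u + b) x c.
Proof. intros eps He. exists (mkposreal 1 Rlt_0_1). intros h Hh _.
  replace ((c * (x + h) + b - (c * x + b)) / h - c) with 0 by (field; auto).
  rewrite Rabs_R0; auto. Qed.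

Lemma dl_val f x l l' : l = l' -> derivable_pt_lim f x l -> derivable_pt_lim f x l'.
Proof. intros ->; auto. Qed.

Lemma mvt_bound (phi phi' : R -> R) (del M : R) :
  (forall s, derivable_pt_lim phi s (phi' s)) ->
  (forall s, Rabs s <= Rabs del -> Rabs (phi' s) <= M) ->
  Rabs (phi del - phi 0) <= M * Rabs del.
Proof.
  intros D B. destruct (Rtotal_order del 0) as [Hl|[He|Hg]].
  - destruct (MVT_cor2 phi phi' del 0 Hl (fun c _ => D c)) as [c [Hc Hr]].
    assert (Rabs (phi' c) <= M) by (apply B; rewrite !Rabs_left1; lra).
    replace (phi del - phi 0) with (- (phi' c * (0 - del))) by lra.
    replace (0 - del) with (- del) by ring.
    rewrite Rabs_Ropp, Rabs_mult, (Rabs_right (- del)) by lra.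
    rewrite (Rabs_left1 del) by lra.
    apply Rmult_le_compat_r; lra.
  - subst. rewrite Rminus_diag, Rabs_R0, Rmult_0_r. lra.
  - destruct (MVT_cor2 phi phi' 0 del Hg (fun c _ => D c)) as [c [Hc Hr]].
    assert (Rabs (phi' c) <= M) by (apply B; rewrite !Rabs_right; lra).
    rewrite Hc, Rabs_mult, (Rabs_right (del - 0)) by lra.
    rewrite (Rabs_right del) by lra. rewrite Rminus_0_r.
    apply Rmult_le_compat_r; lra.
Qed.

Lemma squeeze rho psi t : rho t = 0 -> psi t = 0 -> derivable_pt_lim psi t 0 ->
  (forall s, Rabs (rho s) <= psi s) -> derivable_pt_lim rho t 0.
Proof.
  intros H0 H1 D B eps He. destruct (D eps He) as [del Hd]. exists del. intros h Hh Hl.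
  specialize (Hd h Hh Hl). rewrite H0. rewrite H1 in Hd.
  rewrite !Rminus_0_r in *. unfold Rdiv in *.
  rewrite Rabs_mult in *. rewrite Rabs_inv in *.
  pose proof (B (t + h)). pose proof (Rabs_pos (rho (t+h))).
  rewrite (Rabs_right (psi (t+h))) in Hd by lra.
  assert (0 < / Rabs h) by (apply Rinv_0_lt_compat; apply Rabs_pos_lt; auto).
  nra.
Qed.

Lemma uniq_interval f g t h l1 l2 : 0 < h -> 0 <= t <= h ->
  (forall s, 0 <= s <= h -> f s = g s) ->
  derivable_pt_lim f t l1 -> derivable_pt_lim g t l2 -> l1 = l2.
Proof.
  intros Hh Ht Heq D1 D2. destruct (Req_dec l1 l2) as [|Hne]; auto. exfalso.
  set (eps := Rabs (l1 - l2) / 2).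
  assert (Hep : 0 < eps) by (unfold eps; assert (Hn2 : l1 - l2 <> 0) by lra; pose proof (Rabs_pos_lt _ Hn2); lra).
  destruct (D1 eps Hep) as [d1 H1]. destruct (D2 eps Hep) as [d2 H2].
  pose proof (cond_pos d1) as Hd1. pose proof (cond_pos d2) as Hd2.
  set (e := Rmin (Rmin d1 d2) h / 2).
  assert (He : 0 < e) by (unfold e; pose proof (cond_pos d1); pose proof (cond_pos d2);
     assert (0 < Rmin (Rmin d1 d2) h) by (apply Rmin_pos; [apply Rmin_pos|]; lra); lra).
  assert (He1 : e < d1) by (unfold e; pose proof (Rmin_l (Rmin d1 d2) h); pose proof (Rmin_l d1 d2); lra).
  assert (He2 : e < d2) by (unfold e; pose proof (Rmin_l (Rmin d1 d2) h); pose proof (Rmin_r d1 d2); lra).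
  assert (He3 : e <= h / 2) by (unfold e; pose proof (Rmin_r (Rmin d1 d2) h); lra).
  assert (exists s, s <> 0 /\ Rabs s = e /\ 0 <= t + s <= h) as [s [Hs0 [Hs1 Hs2]]].
  { destruct (Rle_dec (t + e) h).
    - exists e. rewrite Rabs_right by lra. repeat split; lra.
    - exists (-e). rewrite Rabs_Ropp, Rabs_right by lra. repeat split; lra. }
  specialize (H1 s Hs0 ltac:(lra)). specialize (H2 s Hs0 ltac:(lra)).
  rewrite (Heq (t + s) Hs2), (Heq t Ht) in H1.
  apply Rabs_def2 in H1. apply Rabs_def2 in H2.
  unfold eps in *. destruct (Rcase_abs (l1 - l2)).
  rewrite Rabs_left in * by lra. lra. rewrite Rabs_right in * by lra. lra.
Qed.

Lemma fin_choice {A} (L : list A) (P : A -> R -> Prop) :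
  (forall a C C', P a C -> C <= C' -> P a C') -> (forall a, exists C, P a C) ->
  exists C, forall a, In a L -> P a C.
Proof.
  intros Hm He. induction L as [|a L IH].
  - exists 0. intros _ [].
  - destruct IH as [C2 H2]. destruct (He a) as [C1 H1].
    exists (Rmax C1 C2). intros b [<-|Hb].
    + eapply Hm; eauto. apply Rmax_l.
    + eapply Hm; eauto. apply Rmax_r.
Qed.


Fixpoint fenum (d : nat) : list (Fin.t d) :=
  match d with 0%nat => nil | S d => Fin.F1 :: map Fin.FS (fenum d) end.

Lemma fenum_in d (k : Fin.t d) : In k (fenum d).
Proof. induction k; simpl. left; auto. right. apply in_map; auto. Qed.

Lemma fenum_nodup d : NoDup (fenum d).
Proof. induction d; simpl; constructor.
  - intro H. apply in_map_iff in H. destruct H as [x [H _]]. inversion H.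
  - apply Injective_map_NoDup; auto. intros x y H. apply Fin.FS_inj; auto.
Qed.

Lemma lsum_ind_gen d (L : list (Fin.t d)) (c : Fin.t d -> R) a : NoDup L ->
  (In a L -> lsum L (fun i => c i * (if Fin.eq_dec i a then 1 else 0)) = c a) /\
  (~ In a L -> lsum L (fun i => c i * (if Fin.eq_dec i a then 1 else 0)) = 0).
Proof.
  induction L as [|b L IH]; intros Hnd; simpl.
  - split; [intros []|intros; auto].
  - inversion Hnd; subst. destruct (IH H2) as [IH1 IH2].
    destruct (Fin.eq_dec b a) as [->|Hba].
    + split; intros. rewrite IH2 by auto. ring. exfalso; auto.
    + split; intros.
      * destruct H as [->|H]; [congruence|]. rewrite IH1 by auto. ring.
      * rewrite IH2 by tauto. ring.
Qed.

Lemma lsum_ind d (c : Fin.t d -> R) a :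
  lsum (fenum d) (fun i => c i * (if Fin.eq_dec i a then 1 else 0)) = c a.
Proof. apply lsum_ind_gen. apply fenum_nodup. apply fenum_in. Qed.

Fixpoint upd {d} (L : list (Fin.t d)) (x y : Vec d) : Vec d :=
  match L with nil => x | a :: L => shift (upd L x y) a (y a - x a) end.

Lemma upd_spec d (L : list (Fin.t d)) x y k : NoDup L ->
  (In k L -> upd L x y k = y k) /\ (~ In k L -> upd L x y k = x k).
Proof.
  induction L as [|a L IH]; intros Hnd; simpl.
  - split; [intros []|auto].
  - inversion Hnd; subst. destruct (IH H2) as [IH1 IH2]. unfold shift.
    destruct (Fin.eq_dec k a) as [->|Hka].
    + split; intros. rewrite IH2 by auto. ring. exfalso; auto.
    + split; intros.
      * destruct H as [->|H]; [congruence|]. rewrite IH1 by auto. ring.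
      * rewrite IH2 by tauto. ring.
Qed.

Lemma shift_shift d (z : Vec d) a s u : shift (shift z a s) a u = shift z a (s + u).
Proof. apply functional_extensionality; intro k. unfold shift.
  destruct (Fin.eq_dec k a); ring. Qed.

Lemma shift_0 d (z : Vec d) a : shift z a 0 = z.
Proof. apply functional_extensionality; intro k. unfold shift.
  destruct (Fin.eq_dec k a); ring. Qed.

Lemma lip_box d (G : Vec d -> R) (dG : Fin.t d -> Vec d -> R) (x y : Vec d) (M : R) :
  (forall a w, derivable_pt_lim (fun u => G (shift w a u)) 0 (dG a w)) ->
  (forall z, (forall i, Rabs (z i - x i) <= Rabs (y i - x i)) -> forall a, Rabs (dG a z) <= M) ->
  Rabs (G y - G x) <= M * lsum (fenum d) (fun i => Rabs (y i - x i)).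
Proof.
  intros HD HB.
  assert (forall L, NoDup L -> Rabs (G (upd L x y) - G x) <= M * lsum L (fun i => Rabs (y i - x i))).
  { induction L as [|a L IH]; intros Hnd; simpl.
    - rewrite Rminus_diag, Rabs_R0. lra.
    - inversion Hnd; subst. specialize (IH H2).
      set (z := upd L x y) in *.
      assert (Hza : z a = x a) by (apply (upd_spec d L x y a H2); auto).
      assert (Hm : Rabs (G (shift z a (y a - x a)) - G (shift z a 0)) <= M * Rabs (y a - x a)).
      { apply (mvt_bound (fun u => G (shift z a u)) (fun u => dG a (shift z a u))).
        - intro s. apply dl_shift. apply (dl_ext (fun u => G (shift (shift z a s) a u))).
          intro u. rewrite shift_shift; auto. apply HD.
        - intros s Hs. apply HB. intro i. unfold shift.
          destruct (Fin.eq_dec i a) as [->|Hia].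
          + rewrite Hza. replace (x a + s - x a) with s by ring. auto.
          + destruct (in_dec Fin.eq_dec i L) as [Hi|Hi].
            * unfold z. rewrite (proj1 (upd_spec d L x y i H2) Hi). rewrite Rplus_0_r. lra.
            * unfold z. rewrite (proj2 (upd_spec d L x y i H2) Hi). rewrite Rplus_0_r, Rminus_diag, Rabs_R0.
              apply Rabs_pos. }
      rewrite shift_0 in Hm.
      replace (G (shift z a (y a - x a)) - G x) with
        ((G (shift z a (y a - x a)) - G z) + (G z - G x)) by ring.
      eapply Rle_trans. apply Rabs_triang. lra. }
  replace y with (upd (fenum d) x y) at 1.
  apply H. apply fenum_nodup.
  apply functional_extensionality; intro k. apply (upd_spec d (fenum d) x y k (fenum_nodup d)).
  apply fenum_in.
Qed.


Lemma second_bound d (Df : list (Fin.t d) -> Vec d -> Vec d)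
  (HDB : forall l, exists C, forall x k, Rabs (Df l x k) <= C) l :
  exists M2, 0 <= M2 /\ forall a j z k, Rabs (Df (j :: a :: l) z k) <= M2.
Proof.
  destruct (fin_choice (fenum d) (fun a C => forall j z k, Rabs (Df (j :: a :: l) z k) <= C))
    as [M HM].
  - intros a C C' H Hle j z k. specialize (H j z k). lra.
  - intro a. destruct (fin_choice (fenum d) (fun j C => forall z k, Rabs (Df (j :: a :: l) z k) <= C))
      as [M HM].
    + intros j C C' H Hle z k. specialize (H z k). lra.
    + intro j. apply HDB.
    + exists M. intros j. apply HM, fenum_in.
  - exists (Rmax M 0). split. apply Rmax_r. intros a j z k.
    eapply Rle_trans. apply (HM a (fenum_in d a)). apply Rmax_l.
Qed.

Lemma taylor2 d (Df : list (Fin.t d) -> Vec d -> Vec d)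
  (HDf : forall l i x k, derivable_pt_lim (fun s => Df l (shift x i s) k) 0 (Df (i :: l) x k))
  (HDB : forall l, exists C, forall x k, Rabs (Df l x k) <= C) l :
  exists M2, 0 <= M2 /\ forall x y k,
    Rabs (Df l y k - Df l x k - lsum (fenum d) (fun i => Df (i :: l) x k * (y i - x i)))
    <= M2 * lsum (fenum d) (fun i => Rabs (y i - x i)) * lsum (fenum d) (fun i => Rabs (y i - x i)).
Proof.
  destruct (second_bound d Df HDB l) as [M2 [HM0 HM]].
  exists M2. split; auto. intros x y k.
  set (S := lsum (fenum d) (fun i => Rabs (y i - x i))).
  assert (Hlip : forall a z, Rabs (Df (a :: l) z k - Df (a :: l) x k)
                  <= M2 * lsum (fenum d) (fun i => Rabs (z i - x i))).
  { intros a z. apply (lip_box d (fun w => Df (a :: l) w k) (fun j w => Df (j :: a :: l) w k)).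
    - intros j w. apply HDf.
    - intros. apply HM. }
  pose (G := fun w : Vec d => Df l w k - lsum (fenum d) (fun i => Df (i :: l) x k * (w i - x i))).
  assert (HG : Rabs (G y - G x) <= M2 * S * S).
  {
    apply (lip_box d G (fun a w => Df (a :: l) w k -
        lsum (fenum d) (fun i => Df (i :: l) x k * (if Fin.eq_dec i a then 1 else 0)))).
    - intros a w. unfold G.
      apply (dl_ext (minus_fct (fun u => Df l (shift w a u) k)
          (fun u => lsum (fenum d) (fun i => Df (i :: l) x k * (shift w a u i - x i))))).
      intros; reflexivity.
      apply derivable_pt_lim_minus. apply HDf.
      apply (dl_lsum (fenum d) (fun i u => Df (i :: l) x k * (shift w a u i - x i))).
      intros i _. unfold shift. destruct (Fin.eq_dec i a).
      + apply (dl_val _ _ (Df (i :: l) x k)). ring.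
        apply (dl_ext (fun u => Df (i :: l) x k * u + Df (i :: l) x k * (w i - x i))).
        intros; ring. apply dl_affine.
      + apply (dl_val _ _ (0 * 0 + 0)). ring.
        apply (dl_ext (fun u => 0 * u + Df (i :: l) x k * (w i + 0 - x i))).
        intros; ring. apply (dl_val _ _ 0). ring. apply dl_affine.
    - intros z Hz a. rewrite lsum_ind.
      eapply Rle_trans. apply Hlip. apply Rmult_le_compat_l; auto.
      apply lsum_le. intros; auto. }
  unfold G in HG.
  replace (lsum (fenum d) (fun i => Df (i :: l) x k * (x i - x i))) with 0 in HG.
  replace (Df l y k - Df l x k - lsum (fenum d) (fun i => Df (i :: l) x k * (y i - x i)))
   with (Df l y k - lsum (fenum d) (fun i => Df (i :: l) x k * (y i - x i)) - (Df l x k - 0)) by ring.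
  exact HG.
  rewrite <- (lsum_zero (fenum d)). apply lsum_ext. intros; ring.
Qed.

Lemma chain d (Df : list (Fin.t d) -> Vec d -> Vec d)
  (HDf : forall l i x k, derivable_pt_lim (fun s => Df l (shift x i s) k) 0 (Df (i :: l) x k))
  (HDB : forall l, exists C, forall x k, Rabs (Df l x k) <= C) l k
  (c : R -> Vec d) (v : Vec d) t :
  (forall i, derivable_pt_lim (fun s => c s i) t (v i)) ->
  derivable_pt_lim (fun s => Df l (c s) k) t (lsum (fenum d) (fun i => Df (i :: l) (c t) k * v i)).
Proof.
  intros Hc.
  destruct (taylor2 d Df HDf HDB l) as [M2 [HM0 HT]].
  set (x := c t).
  set (N := INR (length (fenum d))).
  set (rho := fun s => Df l (c s) k - Df l x k - lsum (fenum d) (fun i => Df (i :: l) x k * (c s i - x i))).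
  set (psi := fun s => M2 * N * lsum (fenum d) (fun i => (c s i - x i) * (c s i - x i))).
  assert (Hr : derivable_pt_lim rho t 0).
  { apply (squeeze rho psi).
    - unfold rho. replace (lsum (fenum d) (fun i => Df (i :: l) x k * (c t i - x i))) with 0.
      unfold x; ring. rewrite <- (lsum_zero (fenum d)). apply lsum_ext. intros; unfold x; ring.
    - unfold psi. replace (lsum (fenum d) (fun i => (c t i - x i) * (c t i - x i))) with 0.
      ring. rewrite <- (lsum_zero (fenum d)). apply lsum_ext. intros; unfold x; ring.
    - unfold psi. apply (dl_val _ _ (M2 * N * lsum (fenum d) (fun i => v i * (c t i - x i) + (c t i - x i) * v i))).
      replace (lsum (fenum d) (fun i => v i * (c t i - x i) + (c t i - x i) * v i)) with 0.
      ring. rewrite <- (lsum_zero (fenum d)). apply lsum_ext. intros; unfold x; ring.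
      apply (dl_ext (mult_real_fct (M2 * N) (fun s => lsum (fenum d) (fun i => (c s i - x i) * (c s i - x i))))).
      intros; reflexivity.
      apply derivable_pt_lim_scal.
      apply (dl_lsum (fenum d) (fun i s => (c s i - x i) * (c s i - x i))).
      intros i _.
      assert (Hi : derivable_pt_lim (fun s => c s i - x i) t (v i)).
      { apply (dl_val _ _ (v i - 0)). ring.
        apply (dl_ext (minus_fct (fun s => c s i) (fct_cte (x i)))). intros; reflexivity.
        apply derivable_pt_lim_minus; auto. apply derivable_pt_lim_const. }
      apply (dl_ext (mult_fct (fun s => c s i - x i) (fun s => c s i - x i))). intros; reflexivity.
      pose proof (derivable_pt_lim_mult _ _ _ _ _ Hi Hi) as Hm. simpl in Hm. exact Hm.
    - intro s. unfold rho, psi.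
      eapply Rle_trans. apply HT.
      rewrite Rmult_assoc, Rmult_assoc. apply Rmult_le_compat_l; auto.
      pose proof (cs_ineq (fenum d) (fun i => c s i - x i)). unfold N. lra. }
  apply (dl_ext (plus_fct rho (fun s => Df l x k + lsum (fenum d) (fun i => Df (i :: l) x k * (c s i - x i))))).
  intro s. unfold rho, plus_fct. ring.
  apply (dl_val _ _ (0 + (0 + lsum (fenum d) (fun i => Df (i :: l) x k * (v i - 0))))).
  rewrite !Rplus_0_l. apply lsum_ext. intros; ring.
  apply derivable_pt_lim_plus; auto.
  apply (dl_ext (plus_fct (fct_cte (Df l x k)) (fun s => lsum (fenum d) (fun i => Df (i :: l) x k * (c s i - x i))))).
  intros; reflexivity.
  apply derivable_pt_lim_plus. apply derivable_pt_lim_const.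
  apply (dl_lsum (fenum d) (fun i s => Df (i :: l) x k * (c s i - x i))).
  intros i _.
  apply (dl_ext (mult_real_fct (Df (i :: l) x k) (minus_fct (fun s => c s i) (fct_cte (x i))))).
  intros; reflexivity.
  apply derivable_pt_lim_scal. apply derivable_pt_lim_minus; auto. apply derivable_pt_lim_const.
Qed.


Definition mono (d : nat) : Type := (list (Fin.t d) * Fin.t d * list (nat * Fin.t d))%type.

Definition prodp {d} (a : nat -> Fin.t d -> R) (prs : list (nat * Fin.t d)) : R :=
  fold_right (fun pr acc => a (fst pr) (snd pr) * acc) 1 prs.

Definition mval {d} (Df : list (Fin.t d) -> Vec d -> Vec d) (x : Vec d) (a : nat -> Fin.t d -> R)
  (m : mono d) : R :=
  match m with (l, k, prs) => Df l x k * prodp a prs end.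

Definition pval {d} Df (x : Vec d) a (P : list (mono d)) : R := lsum P (mval Df x a).

Fixpoint dprs {d} (prs : list (nat * Fin.t d)) : list (list (nat * Fin.t d)) :=
  match prs with
  | nil => nil
  | (m, i) :: r => ((S m, i) :: r) :: map (cons (m, i)) (dprs r)
  end.

Definition mderiv {d} (m : mono d) : list (mono d) :=
  match m with (l, k, prs) =>
    map (fun a => (a :: l, k, (1%nat, a) :: prs)) (fenum d) ++ map (fun p => (l, k, p)) (dprs prs)
  end.

Definition pderiv {d} (P : list (mono d)) : list (mono d) := flat_map mderiv P.

Fixpoint Pk {d} (k : nat) (i : Fin.t d) : list (mono d) :=
  match k with 0%nat => (nil, i, nil) :: nil | S k => pderiv (Pk k i) end.

Definition tower {d} (Dc : nat -> R -> Vec d) : Prop :=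
  forall m t i, derivable_pt_lim (fun s => Dc m s i) t (Dc (S m) t i).

Definition pvalD {d} Df (Dc : nat -> R -> Vec d) t P := pval Df (Dc 0%nat t) (fun m i => Dc m t i) P.

Lemma prod_deriv d (Dc : nat -> R -> Vec d) (HT : tower Dc) prs t :
  derivable_pt_lim (fun s => prodp (fun m i => Dc m s i) prs) t
    (lsum (dprs prs) (fun p => prodp (fun m i => Dc m t i) p)).
Proof.
  induction prs as [|[m i] r IH]; simpl.
  - apply (dl_ext (fct_cte 1)). intros; reflexivity. apply derivable_pt_lim_const.
  - apply (dl_val _ _ (Dc (S m) t i * prodp (fun m i => Dc m t i) r +
         Dc m t i * lsum (dprs r) (fun p => prodp (fun m i => Dc m t i) p))).
    rewrite lsum_map. f_equal. rewrite <- lsum_scal. apply lsum_ext. intros; reflexivity.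
    apply (dl_ext (mult_fct (fun s => Dc m s i) (fun s => prodp (fun m i => Dc m s i) r))).
    intros; reflexivity.
    pose proof (derivable_pt_lim_mult _ _ _ _ _ (HT m t i) IH) as Hm. simpl in Hm. exact Hm.
Qed.

Lemma mono_deriv d Df
  (HDf : forall l i x k, derivable_pt_lim (fun s => Df l (shift x i s) k) 0 (Df (i :: l) x k))
  (HDB : forall l, exists C, forall x k, Rabs (Df l x k) <= C)
  (Dc : nat -> R -> Vec d) (HT : tower Dc) (mo : mono d) t :
  derivable_pt_lim (fun s => mval Df (Dc 0%nat s) (fun m i => Dc m s i) mo) t
    (pvalD Df Dc t (mderiv mo)).
Proof.
  destruct mo as [[l k] prs]. unfold pvalD, pval, mderiv; simpl.
  rewrite lsum_app, !lsum_map. simpl.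
  apply (dl_val _ _ (lsum (fenum d) (fun i => Df (i :: l) (Dc 0%nat t) k * Dc 1%nat t i)
          * prodp (fun m i => Dc m t i) prs
          + Df l (Dc 0%nat t) k * lsum (dprs prs) (fun p => prodp (fun m i => Dc m t i) p))).
  { f_equal.
    - rewrite Rmult_comm, <- lsum_scal. apply lsum_ext. intros; ring.
    - rewrite <- lsum_scal. apply lsum_ext. intros; ring. }
  apply (dl_ext (mult_fct (fun s => Df l (Dc 0%nat s) k) (fun s => prodp (fun m i => Dc m s i) prs))).
  intros; reflexivity.
  pose proof (derivable_pt_lim_mult _ _ _ _ _
    (chain d Df HDf HDB l k (Dc 0%nat) (Dc 1%nat t) t (fun i => HT 0%nat t i))
    (prod_deriv d Dc HT prs t)) as Hm. simpl in Hm. exact Hm.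
Qed.

Lemma poly_deriv d Df
  (HDf : forall l i x k, derivable_pt_lim (fun s => Df l (shift x i s) k) 0 (Df (i :: l) x k))
  (HDB : forall l, exists C, forall x k, Rabs (Df l x k) <= C)
  (Dc : nat -> R -> Vec d) (HT : tower Dc) (P : list (mono d)) t :
  derivable_pt_lim (fun s => pvalD Df Dc s P) t (pvalD Df Dc t (pderiv P)).
Proof.
  unfold pvalD, pval, pderiv. rewrite lsum_flat_map.
  apply (dl_lsum P (fun mo s => mval Df (Dc 0%nat s) (fun m i => Dc m s i) mo)).
  intros mo _. apply (mono_deriv d Df HDf HDB Dc HT mo t).
Qed.

Definition wf {d} (M : nat) (P : list (mono d)) : Prop :=
  forall mo, In mo P -> forall pr, In pr (snd mo) -> (1 <= fst pr <= M)%nat.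

Lemma dprs_wf d M (prs : list (nat * Fin.t d)) :
  (forall pr, In pr prs -> (1 <= fst pr <= M)%nat) ->
  forall p, In p (dprs prs) -> forall pr, In pr p -> (1 <= fst pr <= S M)%nat.
Proof.
  induction prs as [|[m i] r IH]; simpl; intros H p Hp pr Hpr.
  - destruct Hp.
  - destruct Hp as [<-|Hp].
    + destruct Hpr as [<-|Hpr]; simpl.
      * specialize (H (m, i) (or_introl eq_refl)). simpl in H. lia.
      * specialize (H pr (or_intror Hpr)). lia.
    + apply in_map_iff in Hp. destruct Hp as [p' [<- Hp']].
      destruct Hpr as [<-|Hpr].
      * specialize (H (m, i) (or_introl eq_refl)). simpl in *. lia.
      * apply (IH (fun pr H' => H pr (or_intror H')) p' Hp' pr Hpr).
Qed.

Lemma wf_deriv d M (P : list (mono d)) : wf M P -> wf (S M) (pderiv P).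
Proof.
  unfold wf, pderiv. intros H mo Hmo pr Hpr.
  apply in_flat_map in Hmo. destruct Hmo as [[[l k] prs] [Hin Hmo]].
  specialize (H _ Hin). simpl in H. unfold mderiv in Hmo.
  apply in_app_or in Hmo. destruct Hmo as [Hmo|Hmo]; apply in_map_iff in Hmo;
    destruct Hmo as [z [<- Hz]]; simpl in Hpr.
  - destruct Hpr as [<-|Hpr]; simpl. lia. specialize (H pr Hpr). lia.
  - apply (dprs_wf d M prs H z); auto.
Qed.

Lemma wf_mono d M M' (P : list (mono d)) : wf M P -> (M <= M')%nat -> wf M' P.
Proof. unfold wf; intros H Hle mo Hmo pr Hpr. specialize (H mo Hmo pr Hpr). lia. Qed.

Lemma wf_Pk d k (i : Fin.t d) : wf k (Pk k i).
Proof. induction k; simpl.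
  - intros mo [<-|[]] pr []. 
  - apply wf_deriv; auto.
Qed.


Lemma prod_bound d (prs : list (nat * Fin.t d)) B : exists Bp Cp,
  forall (a b : nat -> Fin.t d -> R) E, 0 <= E ->
  (forall pr, In pr prs -> Rabs (a (fst pr) (snd pr)) <= B /\ Rabs (b (fst pr) (snd pr)) <= B
      /\ Rabs (a (fst pr) (snd pr) - b (fst pr) (snd pr)) <= E) ->
  Rabs (prodp a prs) <= Bp /\ Rabs (prodp b prs) <= Bp /\ Rabs (prodp a prs - prodp b prs) <= Cp * E.
Proof.
  induction prs as [|[m i] r IH].
  - exists 1, 0. intros a b E HE _. simpl. rewrite Rminus_diag, Rabs_R0, Rabs_R1. lra.
  - destruct IH as [Bp [Cp IH]]. exists (B * Bp), (B * Cp + Bp).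
    intros a b E HE H. destruct (IH a b E HE (fun pr Hp => H pr (or_intror Hp))) as [H1 [H2 H3]].
    destruct (H (m, i) (or_introl eq_refl)) as [G1 [G2 G3]]. simpl in *.
    set (Pa := prodp a r) in *. set (Pb := prodp b r) in *.
    pose proof (Rabs_pos (a m i)). pose proof (Rabs_pos (b m i)). pose proof (Rabs_pos Pa).
    pose proof (Rabs_pos Pb). pose proof (Rabs_pos (Pa - Pb)). pose proof (Rabs_pos (a m i - b m i)).
    split; [|split].
    + rewrite Rabs_mult. apply Rmult_le_compat; auto.
    + rewrite Rabs_mult. apply Rmult_le_compat; auto.
    + replace (a m i * Pa - b m i * Pb) with (a m i * (Pa - Pb) + Pb * (a m i - b m i)) by ring.
      eapply Rle_trans. apply Rabs_triang. rewrite !Rabs_mult.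
      assert (Rabs (a m i) * Rabs (Pa - Pb) <= B * (Cp * E)) by (apply Rmult_le_compat; auto).
      assert (Rabs Pb * Rabs (a m i - b m i) <= Bp * E) by (apply Rmult_le_compat; auto).
      lra.
Qed.

Lemma poly_bound d (Df : list (Fin.t d) -> Vec d -> Vec d)
  (HDB : forall l, exists C, forall x k, Rabs (Df l x k) <= C) M (P : list (mono d)) B :
  exists X, forall x (a b : nat -> Fin.t d -> R) E, 0 <= E ->
  (forall m i, (1 <= m <= M)%nat -> Rabs (a m i) <= B /\ Rabs (b m i) <= B /\ Rabs (a m i - b m i) <= E) ->
  wf M P ->
  Rabs (pval Df x a P) <= X /\ Rabs (pval Df x b P) <= X /\ Rabs (pval Df x a P - pval Df x b P) <= X * E.
Proof.
  induction P as [|[[l k] prs] P IH].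
  - exists 0. intros. unfold pval; simpl. rewrite Rminus_diag, Rabs_R0. lra.
  - destruct IH as [X IH]. destruct (prod_bound d prs B) as [Bp [Cp HP]].
    destruct (HDB l) as [K HK].
    exists (Rmax (K * Bp) (K * Cp) + X).
    intros x a b E HE Hab Hwf.
    assert (Hwf' : wf M P) by (intros mo Hmo; apply Hwf; right; auto).
    destruct (IH x a b E HE Hab Hwf') as [I1 [I2 I3]].
    destruct (HP a b E HE) as [J1 [J2 J3]].
    { intros pr Hpr. apply Hab. apply (Hwf (l, k, prs) (or_introl eq_refl) pr Hpr). }
    unfold pval in *. simpl. fold (pval Df x a P) (pval Df x b P) in *.
    pose proof (HK x k). pose proof (Rabs_pos (Df l x k)).
    pose proof (Rabs_pos (prodp a prs)). pose proof (Rabs_pos (prodp b prs)).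
    pose proof (Rabs_pos (prodp a prs - prodp b prs)).
    pose proof (Rmax_l (K * Bp) (K * Cp)). pose proof (Rmax_r (K * Bp) (K * Cp)).
    assert (Ha : Rabs (Df l x k * prodp a prs) <= K * Bp) by (rewrite Rabs_mult; apply Rmult_le_compat; auto).
    assert (Hb : Rabs (Df l x k * prodp b prs) <= K * Bp) by (rewrite Rabs_mult; apply Rmult_le_compat; auto).
    assert (Hc : Rabs (Df l x k * prodp a prs - Df l x k * prodp b prs) <= K * Cp * E).
    { rewrite <- Rmult_minus_distr_l, Rabs_mult, Rmult_assoc. apply Rmult_le_compat; auto. }
    assert (K * Cp * E <= Rmax (K * Bp) (K * Cp) * E) by (apply Rmult_le_compat_r; auto).
    split; [|split].
    + eapply Rle_trans. apply Rabs_triang. lra.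
    + eapply Rle_trans. apply Rabs_triang. lra.
    + replace (Df l x k * prodp a prs + pval Df x a P - (Df l x k * prodp b prs + pval Df x b P))
        with ((Df l x k * prodp a prs - Df l x k * prodp b prs) + (pval Df x a P - pval Df x b P)) by ring.
      eapply Rle_trans. apply Rabs_triang. rewrite Rmult_plus_distr_r. lra.
Qed.


Theorem mainTheorem1
  (d : nat) (f : Vec d -> Vec d) (n : nat) (h0 p : R)
  (q qd : R -> R -> Vec d) (Dq Dqd : R -> nat -> R -> Vec d) :
  smooth_bounded_derivs f ->
  (3 <= n)%nat ->
  0 < h0 -> 0 < p ->
  (forall h, 0 < h <= h0 ->
     deriv_tower (q h) (Dq h) /\
     (forall t i, 0 <= t <= h -> Dq h 2%nat t i = f (q h t) i) /\
     deriv_tower (qd h) (Dqd h) /\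
     pc_hermite f n h (q h) (qd h) (Dqd h)) ->
  (exists B, forall h, 0 < h <= h0 ->
     (forall t i, 0 <= t <= h -> Rabs (Dq h 1%nat t i) <= B) /\
     (forall tau i, (tau = 0 \/ tau = h) -> Rabs (Dqd h 1%nat tau i) <= B)) ->
  (exists C h1, 0 < h1 /\ forall h, 0 < h <= h0 -> h <= h1 ->
     forall tau i, (tau = 0 \/ tau = h) ->
       Rabs (Dqd h 1%nat tau i - Dq h 1%nat tau i) <= C * Rpower h p) ->
  exists C h1, 0 < h1 /\ forall h, 0 < h <= h0 -> h <= h1 ->
    forall tau j i, (tau = 0 \/ tau = h) -> (3 <= j <= n)%nat ->
      Rabs (Dqd h j tau i - Dq h j tau i) <= C * Rpower h p.
Proof.
  intros Hsm Hn Hh0 Hp Hall [B HBd] [C0 [h1 [Hh1 HC]]].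
  destruct Hsm as [Df [HDf0 [HDf HDB]]].
  assert (Fq : forall h, 0 < h <= h0 -> forall k t i, 0 <= t <= h ->
            Dq h (S (S k)) t i = pvalD Df (Dq h) t (Pk k i)).
  { intros h Hh. destruct (Hall h Hh) as [[Tq0 Tq] [Hq2 _]].
    assert (E0 : forall t, Dq h 0%nat t = q h t) by (intro t; apply functional_extensionality; auto).
    induction k; intros t i Ht.
    - rewrite Hq2 by auto. unfold pvalD, pval; simpl. rewrite E0, HDf0. ring.
    - apply (uniq_interval (fun s => Dq h (S (S k)) s i) (fun s => pvalD Df (Dq h) s (Pk k i)) t h);
        [lra | exact Ht | intros s Hs; apply IHk; exact Hs | apply Tq |
         apply (poly_deriv d Df HDf HDB (Dq h) Tq)]. }
  assert (Fd : forall h, 0 < h <= h0 -> forall k tau i, (tau = 0 \/ tau = h) -> (S (S k) <= n)%nat ->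
            Dqd h (S (S k)) tau i = pvalD Df (Dqd h) tau (Pk k i)).
  { intros h Hh. destruct (Hall h Hh) as [_ [_ [[Td0 Td] [_ [_ [_ [F [[F0 FT] Hcol]]]]]]]].
    assert (E0 : forall t, Dqd h 0%nat t = qd h t) by (intro t; apply functional_extensionality; auto).
    assert (HF : forall k t i, F k t i = pvalD Df (Dqd h) t (Pk k i)).
    { induction k; intros t i.
      - rewrite F0. unfold pvalD, pval; simpl. rewrite E0, HDf0. ring.
      - apply (uniqueness_limite (fun s => F k s i) t); auto.
        apply (dl_ext (fun s => pvalD Df (Dqd h) s (Pk k i))). intros; auto.
        apply (poly_deriv d Df HDf HDB (Dqd h) Td). }
    intros k tau i Htau Hk. rewrite Hcol; auto. simpl. rewrite Nat.sub_0_r. auto. lia. }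
  assert (F0 : forall h, 0 < h <= h0 -> forall tau, (tau = 0 \/ tau = h) -> Dqd h 0%nat tau = Dq h 0%nat tau).
  { intros h Hh tau Htau. destruct (Hall h Hh) as [[Tq0 _] [_ [[Td0 _] [_ [Hb0 [Hbh _]]]]]].
    apply functional_extensionality; intro i. rewrite Tq0, Td0.
    destruct Htau as [->| ->]; auto. }
  assert (Hpow : forall h, 0 < Rpower h p) by (intro; unfold Rpower; apply exp_pos).
  assert (Main : forall M, (M <= n)%nat -> exists Bm Cm, 0 <= Cm /\
     forall h, 0 < h <= h0 -> h <= h1 -> forall tau, (tau = 0 \/ tau = h) -> forall m i, (1 <= m <= M)%nat ->
       Rabs (Dq h m tau i) <= Bm /\ Rabs (Dqd h m tau i) <= Bm /\
       Rabs (Dqd h m tau i - Dq h m tau i) <= Cm * Rpower h p).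
  { induction M as [|M IH]; intros HM.
    - exists 0, 0. split. lra. intros. lia.
    - destruct M as [|M'].
      + exists B, (Rabs C0). split. apply Rabs_pos.
        intros h Hh Hh' tau Htau m i Hm. assert (m = 1%nat) by lia. subst m.
        destruct (HBd h Hh) as [Hb1 Hb2]. split; [|split].
        * apply Hb1. destruct Htau as [->| ->]; lra.
        * apply Hb2; auto.
        * eapply Rle_trans. apply (HC h Hh Hh' tau i Htau).
          apply Rmult_le_compat_r. pose proof (Hpow h); lra. apply Rle_abs.
      + destruct (IH ltac:(lia)) as [Bm [Cm [HCm IHb]]].
        destruct (fin_choice (fenum d) (fun i X => forall x (a b : nat -> Fin.t d -> R) E, 0 <= E ->
            (forall m i, (1 <= m <= S M')%nat -> Rabs (a m i) <= Bm /\ Rabs (b m i) <= Bm /\ Rabs (a m i - b m i) <= E) ->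
            wf (S M') (Pk M' i) ->
            Rabs (pval Df x a (Pk M' i)) <= X /\ Rabs (pval Df x b (Pk M' i)) <= X /\
            Rabs (pval Df x a (Pk M' i) - pval Df x b (Pk M' i)) <= X * E)) as [X HX].
        { intros i X X' H Hle x a b E HE Hab Hw. destruct (H x a b E HE Hab Hw) as [H1 [H2 H3]].
          split; [lra|split; [lra|]]. eapply Rle_trans. apply H3. apply Rmult_le_compat_r; auto. }
        { intro i. apply poly_bound; auto. }
        exists (Rmax Bm X), (Rmax Cm (X * Cm)). split.
        { eapply Rle_trans. apply HCm. apply Rmax_l. }
        intros h Hh Hh' tau Htau m i Hm.
        pose proof (Hpow h).
        pose proof (Rmax_l Bm X). pose proof (Rmax_r Bm X).
        pose proof (Rmax_l Cm (X * Cm)). pose proof (Rmax_r Cm (X * Cm)).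
        destruct (Nat.eq_dec m (S (S M'))) as [->|Hne].
        * assert (Htau' : 0 <= tau <= h) by (destruct Htau as [->| ->]; lra).
          rewrite (Fq h Hh M' tau i Htau'), (Fd h Hh M' tau i Htau HM).
          unfold pvalD. rewrite (F0 h Hh tau Htau).
          destruct (HX i (fenum_in d i) (Dq h 0%nat tau) (fun m i => Dqd h m tau i) (fun m i => Dq h m tau i)
                     (Cm * Rpower h p)) as [K1 [K2 K3]].
          { apply Rmult_le_pos; lra. }
          { intros m j Hmj. destruct (IHb h Hh Hh' tau Htau m j Hmj) as [G1 [G2 G3]]. auto. }
          { eapply wf_mono. apply wf_Pk. lia. }
          split; [lra|split; [lra|]].
          eapply Rle_trans. apply K3. rewrite <- Rmult_assoc.
          apply Rmult_le_compat_r; lra.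
        * destruct (IHb h Hh Hh' tau Htau m i ltac:(lia)) as [G1 [G2 G3]].
          split; [lra|split; [lra|]].
          eapply Rle_trans. apply G3. apply Rmult_le_compat_r; lra. }
  destruct (Main n (Nat.le_refl n)) as [Bn [Cn [_ HMn]]].
  exists Cn, h1. split; auto.
  intros h Hh Hh' tau j i Htau Hj.
  apply (HMn h Hh Hh' tau Htau j i). lia.
Qed.
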